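(* Let $m>1$ and $n>1$ be naturals, let $\mathcal{F}$ be a surjective linear cellular automaton over $(\mathbb{Z}/m\mathbb{Z})^n$ and let $A\in\mathbb{L}_m^{n\times n}$ be its associated matrix. Then there exists an integer $c\geq0$ (depending only on $A$) such that all of the following hold: (C1) for every $\upsilon\in\mathbb{S}_m^n$ with $\deg^+(\upsilon)=0$ there exist an integer $h$ with $-c\le h\le c$ and $\omega\in\mathbb{S}_m^n$ with $\deg^+(\omega)=h$ and $A\omega=\upsilon$; (C2) for every $\upsilon\in\mathbb{S}_m^n$ with $\deg^-(\upsilon)=0$ there exist an integer $h$ with $-c\le h\le c$ and $\omega\in\mathbb{S}_m^n$ with $\deg^-(\omega)=h$ and $A\omega=\upsilon$; (C3) for every $\upsilon\in\mathbb{S}_m^n$ with $\deg^+(\upsilon)=0$ we have $\deg^+(A\upsilon)=h$ for some integer $-c\le h\le c$; (C4) for every $\upsilon\in\mathbb{S}_m^n$ with $\deg^-(\upsilon)=0$ we have $\deg^-(A\upsilon)=h$ for some integer $-c\le h\le c$.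
   Context: $\mathbb{L}_m=\mathbb{Z}/m\mathbb{Z}[X,X^{-1}]$ and $\mathbb{S}_m=\mathbb{Z}/m\mathbb{Z}[[X,X^{-1}]]$ (bi-infinite formal series $\sum_{i\in\mathbb{Z}}a_iX^i$). An element $\upsilon\in\mathbb{S}_m^n$ is regarded as a formal series $\sum_{i\in\mathbb{Z}}v_iX^i$ with $v_i\in(\mathbb{Z}/m\mathbb{Z})^n$; for $\upsilon\neq0$, $\deg^+(\upsilon)=\sup\{i:v_i\neq0\}$ and $\deg^-(\upsilon)=\inf\{i:v_i\neq0\}$ (which may be $+\infty$, resp. $-\infty$); $\deg^+(0)=-\infty$, $\deg^-(0)=+\infty$. Matrices in $\mathbb{L}_m^{n\times n}$ act on $\mathbb{S}_m^n$ by the usual (well-defined) product. A linear cellular automaton over $(\mathbb{Z}/m\mathbb{Z})^n$ is the map $\mathcal{F}$ on $((\mathbb{Z}/m\mathbb{Z})^n)^{\mathbb{Z}}$ given by $\mathcal{F}(c)_i=\sum_{j=-r}^rA_jc_{i+j}$ for some $r\in\mathbb{N}$ and $A_j\in(\mathbb{Z}/m\mathbb{Z})^{n\times n}$; its associated matrix is $\sum_{j=-r}^rA_jX^{-j}$. It is surjective if $\mathcal{F}$ is a surjective map. *)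

(* Defs.v *)
From HB Require Import structures.
From mathcomp Require Import all_boot all_order all_algebra.
Set Implicit Arguments. Unset Strict Implicit. Unset Printing Implicit Defensive.
Import Order.TTheory GRing.Theory Num.Theory.
Local Open Scope ring_scope.

(* Elements of S_m^n: bi-infinite formal series sum_i v_i X^i, v_i in (Z/mZ)^n,
   represented by the coefficient function i |-> v_i. *)
Definition series (m n : nat) := int -> 'cV['Z_m]_n.

(* A linear cellular automaton of radius r with local matrices A_j (j in [-r,r]),
   given by coef : int -> 'M_n (only the values on [-r,r] are used):
   F(c)_i = sum_{j=-r}^{r} A_j c_{i+j}.  Its associated matrix is
   sum_j A_j X^{-j}; the product of that Laurent-polynomial matrix with a series
   w = sum_i w_i X^i has coefficient at i equal to sum_j A_j w_{i+j}, i.e.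
   the action of the associated matrix on S_m^n coincides with [lca]. *)
Definition lca (m n r : nat) (coef : int -> 'M['Z_m]_n) (c : series m n) : series m n :=
  fun i => \sum_(k < (2 * r).+1) coef (k%:Z - r%:Z) *m c (i + (k%:Z - r%:Z)).

Definition assoc_mx_act (m n r : nat) (coef : int -> 'M['Z_m]_n) (w : series m n)
  : series m n := lca r coef w.

Definition surjective_lca (m n r : nat) (coef : int -> 'M['Z_m]_n) : Prop :=
  forall d : series m n, exists c : series m n, lca r coef c = d.

Definition degp_eq (m n : nat) (v : series m n) (h : int) : Prop :=
  v h != 0 /\ forall i : int, h < i -> v i = 0.

Definition degm_eq (m n : nat) (v : series m n) (h : int) : Prop :=
  v h != 0 /\ forall i : int, i < h -> v i = 0.

(* Main.v *)
Require Import Defs.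
From HB Require Import structures.
From mathcomp Require Import all_boot all_order all_algebra zify.
From Stdlib Require Import FunctionalExtensionality.
Import Order.TTheory GRing.Theory Num.Theory.
Local Open Scope ring_scope.

Lemma lca_local (m n r : nat) (coef : int -> 'M['Z_m]_n) (x y : series m n) (i : int) :
  (forall t : int, - (r%:Z) <= t <= r%:Z -> x (i + t) = y (i + t)) ->
  lca r coef x i = lca r coef y i.
Proof.
move=> H; rewrite /lca; apply: eq_bigr => k _; rewrite H //.
have := ltn_ord k; lia.
Qed.

Lemma lca0 (m n r : nat) (coef : int -> 'M['Z_m]_n) (i : int) :
  lca r coef (fun _ => 0) i = 0.
Proof. by rewrite /lca big1 // => k _; rewrite mulmx0. Qed.

Lemma lca_zero (m n r : nat) (coef : int -> 'M['Z_m]_n) (x : series m n) (i : int) :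
  (forall t : int, - (r%:Z) <= t <= r%:Z -> x (i + t) = 0) ->
  lca r coef x i = 0.
Proof. by move=> H; rewrite (@lca_local _ _ _ _ x (fun _ => 0)) ?lca0. Qed.

Lemma lcaB (m n r : nat) (coef : int -> 'M['Z_m]_n) (x y : series m n) (i : int) :
  lca r coef (fun j => x j - y j) i = lca r coef x i - lca r coef y i.
Proof. by rewrite /lca -sumrB; apply: eq_bigr => k _; rewrite mulmxBr. Qed.

Lemma lca_shift (m n r : nat) (coef : int -> 'M['Z_m]_n) (x : series m n) (j i : int) :
  lca r coef (fun p => x (p + j)) i = lca r coef x (i + j).
Proof. by rewrite /lca; apply: eq_bigr => k _; congr (_ *m x _); lia. Qed.

Lemma max_exists (P : int -> bool) (i0 p : int) : P i0 -> (forall i, p < i -> ~~ P i) ->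
  exists i, [/\ P i, i0 <= i & forall k, i < k -> ~~ P k].
Proof.
move=> Pi0 Hp.
have key : forall d : nat, (forall k, p - d%:Z <= k -> ~~ P k) \/
   exists i, [/\ P i, p - d%:Z <= i & forall k, i < k -> ~~ P k].
  elim=> [|d [IH|IH]].
  - case Pp: (P p); [right; exists p; split => //; lia|left => k hk].
    have [->|ne] := eqVneq k p; first by rewrite Pp.
    by apply: Hp; lia.
  - case Pq: (P (p - d.+1%:Z)).
      by right; exists (p - d.+1%:Z); split => // k hk; apply: IH; lia.
    left => k hk; have [->|ne] := eqVneq k (p - d.+1%:Z); first by rewrite Pq.
    by apply: IH; lia.
  - right; case: IH => i [a b c]; exists i; split => //.
    move: b; rewrite -!(addn1 d) PoszD; lia.
case: (key `|p - i0|%N) => [H|[i [a b c]]].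
  by move: (H i0); rewrite Pi0 => /(_ _)/negP; case; lia.
exists i; split => //.
case: (lerP i0 i) => // hlt.
by move: (c i0 hlt); rewrite Pi0.
Qed.
Definition win (m n r L : nat) (a : int) (x : series m n) :
  {ffun 'I_(L + 2 * r)%N.+1 -> 'cV['Z_m]_n} :=
  [ffun u : 'I_(L + 2 * r)%N.+1 => x (a - r%:Z + (u : nat)%:Z)].

Definition phiW (m n r L : nat) (coef : int -> 'M['Z_m]_n)
  (y : {ffun 'I_(L + 2 * r)%N.+1 -> 'cV['Z_m]_n}) : {ffun 'I_L.+1 -> 'cV['Z_m]_n} :=
  [ffun t : 'I_L.+1 => \sum_(k < (2 * r).+1) coef (k%:Z - r%:Z) *m y (inord (t + k))].

Arguments win {m n} r L a x.
Arguments phiW {m n r L} coef y.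

Lemma phiW_win (m n r L : nat) (coef : int -> 'M['Z_m]_n) (a : int) (x : series m n) :
  phiW coef (win r L a x) = [ffun t : 'I_L.+1 => lca r coef x (a + (t : nat)%:Z)].
Proof.
apply/ffunP => t; rewrite !ffunE /lca; apply: eq_bigr => k _; rewrite ffunE inordK.
  by congr (_ *m x _); rewrite PoszD; lia.
by have := ltn_ord k; have := ltn_ord t; lia.
Qed.

Lemma phiWD (m n r L : nat) (coef : int -> 'M['Z_m]_n) x y :
  phiW (r := r) (L := L) coef (x + y) = phiW coef x + phiW coef y.
Proof.
apply/ffunP => t; rewrite !ffunE -big_split /=; apply: eq_bigr => k _.
by rewrite ffunE mulmxDr.
Qed.

Lemma phiW_surj (m n r L : nat) (coef : int -> 'M['Z_m]_n) :
  surjective_lca r coef -> forall y, exists x, phiW (r := r) (L := L) coef x = y.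
Proof.
move=> hs y.
pose d : series m n := fun i => match i with
  | Posz k => if (k <= L)%N then y (inord k) else 0 | Negz _ => 0 end.
have [c hc] := hs d.
exists (win r L 0 c); rewrite phiW_win; apply/ffunP => t; rewrite ffunE hc add0r /d.
by rewrite -ltnS ltn_ord inord_val.
Qed.

Lemma ker_card (m n r L : nat) (coef : int -> 'M['Z_m]_n) :
  surjective_lca r coef ->
  (#|[set x | phiW (r := r) (L := L) coef x == 0%R]| <= #|{: 'cV['Z_m]_n}| ^ (2 * r))%N.
Proof.
move=> hs.
set K := [set x | _].
pose pre (y : {ffun 'I_L.+1 -> 'cV['Z_m]_n}) := odflt 0 [pick x | phiW (r := r) coef x == y].
have preP : forall y, phiW (r := r) coef (pre y) = y.
  move=> y; rewrite /pre; case: pickP => [x /eqP //|H].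
  by have [x hx] := @phiW_surj _ _ _ L _ hs y; move: (H x); rewrite hx eqxx.
pose g (p : {ffun 'I_L.+1 -> 'cV['Z_m]_n} * {ffun 'I_(L + 2 * r)%N.+1 -> 'cV['Z_m]_n}) :=
  pre p.1 + p.2.
have ginj : {in setX [set: {ffun 'I_L.+1 -> 'cV['Z_m]_n}] K &, injective g}.
  move=> [y1 x1] [y2 x2]; rewrite !inE /= => h1 h2 /= eq.
  have ey : y1 = y2.
    by move: (congr1 (phiW coef) eq); rewrite !phiWD !preP (eqP h1) (eqP h2) !addr0.
  by subst; move: eq; rewrite /g /= => /addrI ->.
have := card_in_imset ginj; rewrite cardsX cardsT => hc.
have := max_card (mem (g @: setX [set: {ffun 'I_L.+1 -> 'cV['Z_m]_n}] K)).
rewrite hc !card_ffun !card_ord.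
set s := #|{: 'cV['Z_m]_n}|.
move=> h.
have s0 : (0 < s ^ L.+1)%N by rewrite expn_gt0 /s (cardD1 (0 : 'cV['Z_m]_n)).
have e : (s ^ (L + 2 * r).+1 = s ^ (2 * r) * s ^ L.+1)%N.
  by rewrite -expnD; congr expn; lia.
rewrite -(leq_pmul2r s0) -e mulnC.
exact: h.
Qed.

Lemma core (m n r : nat) (coef : int -> 'M['Z_m]_n) (hs : surjective_lca r coef)
  (L : nat) (a : int) (f : 'I_(#|{: 'cV['Z_m]_n}| ^ (2 * r)).+1 -> series m n) :
  (forall j (t : nat), (t <= L)%N -> lca r coef (f j) (a + t%:Z) = 0) ->
  injective (fun j => win r L a (f j)) -> False.
Proof.
move=> hz hinj.
have := @ker_card _ _ _ L _ hs.
set K := [set x | _].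
have sub : [set win r L a (f j) | j in 'I_(#|{: 'cV['Z_m]_n}| ^ (2 * r)).+1] \subset K.
  apply/subsetP => x /imsetP [j _ ->]; rewrite inE phiW_win; apply/eqP/ffunP => t.
  by rewrite !ffunE hz // -ltnS.
have := subset_leq_card sub; rewrite card_imset // card_ord => h1 h2.
by have := leq_trans h1 h2; rewrite ltnn.
Qed.

Lemma G3 (m n r : nat) (coef : int -> 'M['Z_m]_n) (hs : surjective_lca r coef)
  (w : series m n) (h : int) : degp_eq w h ->
  exists i, h - (#|{: 'cV['Z_m]_n}| ^ (2 * r))%N%:Z <= i <= h + r%:Z /\
    degp_eq (lca r coef w) i.
Proof.
set B := (#|{: 'cV['Z_m]_n}| ^ (2 * r))%N.
case=> wh wz.
have hz : forall i, h + r%:Z < i -> lca r coef w i = 0.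
  by move=> i hi; apply: lca_zero => t ht; apply: wz; lia.
have [/existsP [t ht]|nex] := boolP [exists t : 'I_(B + r).+1, lca r coef w (h - B%:Z + (t : nat)%:Z) != 0].
  have [i [Pi i0i Hi]] := @max_exists (fun i => lca r coef w i != 0) _ (h + r%:Z) ht
    (fun i hi => introT negPn (introT eqP (hz i hi))).
  exists i; split; last first.
    by split => // k hk; apply/eqP; rewrite -[_ == _]negbK; apply: Hi.
  apply/andP; split; first by have := ltn_ord t; lia.
  case: (lerP i (h + r%:Z)) => // hi.
  by move: Pi; rewrite hz // eqxx.
exfalso.
have all0 : forall t : nat, (t <= B + r)%N -> lca r coef w (h - B%:Z + t%:Z) = 0.
  move=> t ht; apply/eqP; move/existsPn: nex => /(_ (Ordinal (n:=(B+r).+1) (m:=t) ht)).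
  by rewrite negbK.
pose f (j : 'I_B.+1) : series m n := fun p => w (p + (j : nat)%:Z).
apply: (@core _ _ _ _ hs (B + r) (h - B%:Z) f).
  move=> j t ht; rewrite /f lca_shift.
  case: (lerP (h - B%:Z + t%:Z + (j : nat)%:Z) (h + r%:Z)) => hh.
    have -> : h - B%:Z + t%:Z + (j : nat)%:Z = h - B%:Z + (t + j)%N%:Z by rewrite PoszD; lia.
    by apply: all0; lia.
  by apply: hz.
have neq : forall j k : 'I_B.+1, (j < k)%N -> win r (B + r) (h - B%:Z) (f j) <> win r (B + r) (h - B%:Z) (f k).
  move=> j k jk e.
  have ub : (B - j + r < (B + r + 2 * r).+1)%N by have := ltn_ord j; lia.
  move/ffunP: e => /(_ (Ordinal ub)); rewrite /= !ffunE /f.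
  have -> : h - B%:Z - r%:Z + (B - j + r)%N%:Z + (j : nat)%:Z = h.
    by have := ltn_ord j; lia.
  rewrite [w (_ + (k : nat)%:Z)]wz; first by move=> hh; move: wh; rewrite hh eqxx.
  by have := ltn_ord j; have := ltn_ord k; move: jk => /=; lia.
move=> j k e; apply/val_inj; case: (ltngtP j k) => // jk.
  by case: (neq _ _ jk e).
by case: (neq _ _ jk (esym e)).
Qed.

Lemma Gker_right (m n r : nat) (coef : int -> 'M['Z_m]_n) (hs : surjective_lca r coef)
  (z : series m n) (p : int) :
  (forall i, lca r coef z i = 0) -> (forall i, p < i -> z i = 0) -> forall i, z i = 0.
Proof.
move=> hk hp i0; case: (eqVneq (z i0) 0) => // ne; exfalso.
have [h [Ph _ Hh]] := @max_exists (fun i => z i != 0) i0 p ne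
   (fun i hi => introT negPn (introT eqP (hp i hi))).
have [i [_ [ne2 _]]] := @G3 _ _ _ _ hs z h (conj Ph (fun k hk => eqP (negbNE (Hh k hk)))).
by move: ne2; rewrite hk eqxx.
Qed.

Lemma lca_refl (m n r : nat) (coef coef' : int -> 'M['Z_m]_n)
  (hc : forall k, coef' k = coef (- k)) (x : series m n) (i : int) :
  lca r coef' (fun p => x (- p)) i = lca r coef x (- i).
Proof.
rewrite /lca (reindex_inj rev_ord_inj) /=; apply: eq_bigr => k _; rewrite hc.
have hk := ltn_ord k.
congr (coef _ *m x _); rewrite subSS; lia.
Qed.

Lemma surj_refl (m n r : nat) (coef coef' : int -> 'M['Z_m]_n)
  (hc : forall k, coef' k = coef (- k)) :
  surjective_lca r coef -> surjective_lca r coef'.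
Proof.
move=> hs d; have [c hc'] := hs (fun i => d (- i)).
exists (fun p => c (- p)); apply: functional_extensionality => i.
by rewrite (@lca_refl _ _ _ _ _ hc) hc' opprK.
Qed.

Lemma Gker_left (m n r : nat) (coef : int -> 'M['Z_m]_n) (hs : surjective_lca r coef)
  (z : series m n) (p : int) :
  (forall i, lca r coef z i = 0) -> (forall i, i < p -> z i = 0) -> forall i, z i = 0.
Proof.
move=> hk hp i.
have hc : forall k, (fun k => coef (- k)) k = coef (- k) by [].
have := @Gker_right _ _ _ _ (@surj_refl _ _ _ _ _ hc hs) (fun q => z (- q)) (- p).
move=> H; rewrite -(opprK i); apply: H.
  by move=> j; rewrite (@lca_refl _ _ _ _ _ hc) hk.
by move=> j hj; apply: hp; lia.
Qed.

Lemma RD (m n r : nat) (coef : int -> 'M['Z_m]_n) (hs : surjective_lca r coef)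
  (d : series m n) (a p : int) :
  (forall i, a <= i -> lca r coef d i = 0) ->
  (forall t : nat, (t < 2 * r)%N -> d (p + t%:Z) = 0) -> a <= p ->
  forall i, p <= i -> d i = 0.
Proof.
move=> hd hw ap.
pose d' : series m n := fun i => if i < p then 0 else d i.
have hk : forall i, lca r coef d' i = 0.
  move=> i; case: (lerP (p + r%:Z) i) => hi.
    rewrite -(hd i); last by lia.
    apply: lca_local => t ht; rewrite /d' ifF //; apply/negbTE; rewrite -leNgt; lia.
  apply: lca_zero => t ht; rewrite /d'; case: ifP => // hlt.
  have -> : i + t = p + Posz (absz (i + t - p)%R) by move/negbT: hlt; rewrite -leNgt; lia.
  by apply: hw; move/negbT: hlt; rewrite -leNgt; lia.
move=> i hi; have := @Gker_left _ _ _ _ hs d' p hk.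
have h2 : forall i, i < p -> d' i = 0 by move=> j hj; rewrite /d' hj.
by move=> /(_ h2 i); rewrite /d' ifF //; apply/negbTE; rewrite -leNgt.
Qed.

Lemma degp_uniq (m n : nat) (v : series m n) (a b : int) :
  degp_eq v a -> degp_eq v b -> a = b.
Proof.
case=> va za [vb zb]; case: (ltgtP a b) => // h.
  by move: vb; rewrite za // eqxx.
by move: va; rewrite zb // eqxx.
Qed.

Lemma G1 (m n r : nat) (coef : int -> 'M['Z_m]_n) (hs : surjective_lca r coef)
  (v : series m n) : degp_eq v 0 ->
  exists h : int, - (r%:Z) <= h <= (#|{: 'cV['Z_m]_n}| ^ (2 * r))%N%:Z /\
    exists w : series m n, degp_eq w h /\ lca r coef w = v.
Proof.
set B := (#|{: 'cV['Z_m]_n}| ^ (2 * r))%N.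
move=> hv; case: (hv) => v0 vz.
have [w0 hw0] := hs v.
pose P (j : 'I_B.+1) : {ffun 'I_(2 * r) -> 'cV['Z_m]_n} :=
  [ffun u : 'I_(2 * r) => w0 ((j : nat).+1%:Z + (u : nat)%:Z)].
have [j [k [jk ejk]]] : exists j k : 'I_B.+1, (j < k)%N /\ P j = P k.
  case: (boolP [exists j : 'I_B.+1, exists k : 'I_B.+1, (j < k)%N && (P j == P k)]).
    by move=> /existsP[j /existsP[k /andP[jk /eqP e]]]; exists j, k.
  move=> ne; exfalso.
  have inj : injective P.
    move=> j k e; apply/val_inj; case: (ltngtP j k) => // jk.
      by move/existsPn: ne => /(_ j)/existsPn/(_ k); rewrite jk e eqxx.
    by move/existsPn: ne => /(_ k)/existsPn/(_ j); rewrite jk e eqxx.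
  have := leq_card P inj; rewrite card_ffun !card_ord.
  by rewrite -/B ltnn.
set T := (k - j)%N.
have T1 : (1 <= T)%N by rewrite /T subn_gt0.
set j1 : int := (j : nat).+1%:Z.
have per : forall i, j1 <= i -> w0 (i + T%:Z) = w0 i.
  have := @RD _ _ _ _ hs (fun i => w0 i - w0 (i + T%:Z)) 1 j1.
  move=> H i hi; apply/eqP; rewrite eq_sym -subr_eq0; apply/eqP; apply: H => //.
  - move=> q hq; rewrite (@lcaB _ _ _ _ w0 (fun p => w0 (p + T%:Z))) lca_shift hw0.
    by rewrite !vz ?subrr //; lia.
  - move=> t ht; move/ffunP: ejk => /(_ (Ordinal ht)); rewrite !ffunE /= => e.
    apply/eqP; rewrite subr_eq0 e; apply/eqP; congr w0.
    by rewrite /j1 /T; move: jk; clear; lia.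
have perN : forall (q : nat) i, j1 <= i -> w0 (i + (q * T)%N%:Z) = w0 i.
  elim=> [|q IH] i hi; first by rewrite mul0n addr0.
  have -> : i + (q.+1 * T)%N%:Z = (i + (q * T)%N%:Z) + T%:Z by rewrite mulSn; lia.
  by rewrite per ?IH //; lia.
have qT : forall q : nat, (q <= q * T)%N by move=> q; rewrite leq_pmulr.
pose z : series m n := fun i => w0 (i + ((absz (j1 - i)%R) * T)%N%:Z).
have zN : forall i (q : nat), j1 <= i + (q * T)%N%:Z -> z i = w0 (i + (q * T)%N%:Z).
  move=> i q hq; rewrite /z; set q0 := absz (j1 - i)%R.
  have hq0 : j1 <= i + (q0 * T)%N%:Z by have := qT q0; rewrite /q0; lia.
  case: (leqP q0 q) => hle.
    have e : (q * T = q0 * T + (q - q0) * T)%N by rewrite -mulnDl (subnKC hle).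
    by rewrite e PoszD addrA (perN (q - q0)%N (i + (q0 * T)%N%:Z) hq0).
  have e : (q0 * T = q * T + (q0 - q) * T)%N by rewrite -mulnDl (subnKC (ltnW hle)).
  by rewrite e PoszD addrA (perN (q0 - q)%N (i + (q * T)%N%:Z) hq).
have zw : forall i, j1 <= i -> z i = w0 i.
  by move=> i hi; rewrite (zN i 0%N) ?mul0n ?addr0.
have zper : forall i (q : nat), z (i + (q * T)%N%:Z) = z i.
  move=> i q; set q1 := absz (j1 - i)%R.
  have h1 := qT q1; have h2 := qT q.
  rewrite (zN _ q1); last by rewrite /q1; lia.
  rewrite (zN i (q + q1)); last by rewrite mulnDl /q1; lia.
  by rewrite mulnDl PoszD addrA.
have zk : forall i, lca r coef z i = 0.
  move=> i; set q := (absz i + r + absz j1)%N.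
  have hq := qT q.
  have <- : lca r coef (fun p => z (p + (q * T)%N%:Z)) i = lca r coef z i.
    by apply: lca_local => t _; rewrite zper.
  rewrite lca_shift (@lca_local _ _ _ _ z w0); last first.
    by move=> t ht; apply: zw; rewrite /q in hq; lia.
  by rewrite hw0 vz //; rewrite /q in hq; lia.
pose w : series m n := fun i => w0 i - z i.
have lw : lca r coef w = v.
  apply: functional_extensionality => i.
  by rewrite (@lcaB _ _ _ _ w0 z) hw0 zk subr0.
have wz0 : forall i, j1 <= i -> w i = 0 by move=> i hi; rewrite /w zw // subrr.
have [t ht] : exists t : 'I_(2 * r).+1, w ((t : nat)%:Z - r%:Z) != 0.
  case: (boolP [exists t : 'I_(2 * r).+1, w ((t : nat)%:Z - r%:Z) != 0]).
    by move=> /existsP.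
  move=> /existsPn H; exfalso; move: v0; rewrite -lw lca_zero ?eqxx //.
  move=> t ht.
  have ub : (absz (t + r%:Z)%R < (2 * r).+1)%N by lia.
  move: (H (Ordinal ub)); rewrite negbK /= => /eqP <-; congr w; lia.
have [h [Ph _ Hh]] := @max_exists (fun i => w i != 0) _ (j1 - 1) ht
   (fun i hi => introT negPn (introT eqP (wz0 i ltac:(lia)))).
have dw : degp_eq w h by split => // q hq; apply/eqP; rewrite -[_ == _]negbK; apply: Hh.
have [i [hi di]] := @G3 _ _ _ _ hs w h dw.
rewrite lw in di; have i0 := @degp_uniq _ _ _ _ _ hv di; subst i.
exists h; split; first by lia.
by exists w.
Qed.

Lemma refl_degp (m n : nat) (x : series m n) (h : int) :
  degp_eq (fun i => x (- i)) h -> degm_eq x (- h).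
Proof.
case=> a b; split => // i hi; rewrite -(opprK i); apply: b; lia.
Qed.

Lemma refl_degm (m n : nat) (x : series m n) (h : int) :
  degm_eq x h -> degp_eq (fun i => x (- i)) (- h).
Proof.
case=> a b; split; first by rewrite opprK.
move=> i hi; apply: b; lia.
Qed.

Theorem lemma3 (m n : nat) (hm : (1 < m)%N) (hn : (1 < n)%N)
  (r : nat) (coef : int -> 'M['Z_m]_n) (hsurj : surjective_lca r coef) :
  exists c : nat,
    (forall v : series m n, degp_eq v 0 ->
       exists h : int, - (c%:Z) <= h <= c%:Z /\
         exists w : series m n, degp_eq w h /\ assoc_mx_act r coef w = v) /\
    (forall v : series m n, degm_eq v 0 ->
       exists h : int, - (c%:Z) <= h <= c%:Z /\
         exists w : series m n, degm_eq w h /\ assoc_mx_act r coef w = v) /\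
    (forall v : series m n, degp_eq v 0 ->
       exists h : int, - (c%:Z) <= h <= c%:Z /\ degp_eq (assoc_mx_act r coef v) h) /\
    (forall v : series m n, degm_eq v 0 ->
       exists h : int, - (c%:Z) <= h <= c%:Z /\ degm_eq (assoc_mx_act r coef v) h).
Proof.
set B := (#|{: 'cV['Z_m]_n}| ^ (2 * r))%N.
pose coef' := fun k : int => coef (- k).
have hc : forall k, coef' k = coef (- k) by [].
have hc' : forall k, coef k = coef' (- k) by move=> k; rewrite /coef' opprK.
have hs' := @surj_refl _ _ _ _ _ hc hsurj.
exists (r + B)%N; rewrite /assoc_mx_act; split; [|split; [|split]].
- move=> v hv; have [h [hb hw]] := @G1 _ _ _ _ hsurj v hv.
  by exists h; split => //; rewrite -/B in hb; lia.
- move=> v hv; have := @refl_degm _ _ _ _ hv; rewrite oppr0 => hv'.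
  have [h [hb [w' [dw lw]]]] := @G1 _ _ _ _ hs' _ hv'.
  exists (- h); split; first by rewrite -/B in hb; lia.
  exists (fun i => w' (- i)); split.
    by apply: refl_degp; case: dw => a b; split => [|q hq]; rewrite opprK //; apply: b.
  apply: functional_extensionality => i.
  by rewrite (@lca_refl _ _ _ _ _ hc') lw opprK.
- move=> v hv; have [i [hb hi]] := @G3 _ _ _ _ hsurj v 0 hv.
  by exists i; split => //; rewrite -/B in hb; lia.
- move=> v hv; have := @refl_degm _ _ _ _ hv; rewrite oppr0 => hv'.
  have [i [hb hi]] := @G3 _ _ _ _ hs' _ 0 hv'.
  exists (- i); split; first by rewrite -/B in hb; lia.
  apply: refl_degp.
  have -> : (fun j => lca r coef v (- j)) = lca r coef' (fun p => v (- p)).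
    by apply: functional_extensionality => j; rewrite (@lca_refl _ _ _ _ _ hc).
  exact: hi.
Qed.
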